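(* Let $p$ be a prime, $n,s,m\ge2$, and $a,b,c,d,e,f\in\mathbb{Z}_p$. Then $T_{RN}$ is invertible over $\mathbb{Z}_p$ if and only if $$ 0\notin\mathbf{R}_{n;c,d}+\mathbf{R}_{s;a,b}+\mathbf{R}_{m;e,f}. $$
   Context: For $k\ge1$ and $t_1,t_2\in\mathbb{Z}_p$, $S_k(t_1,t_2)$ is the $k\times k$ tridiagonal matrix with zeros on the main diagonal, every subdiagonal entry (positions $(i+1,i)$) equal to $t_1$, and every superdiagonal entry (positions $(i,i+1)$) equal to $t_2$. $I_r$ is the $r\times r$ identity and $\otimes$ the Kronecker product. $M_s=I_s\otimes S_n(c,d)+S_s(a,b)\otimes I_n$ and $T_{RN}=I_m\otimes M_s+S_m(f,e)\otimes I_{ns}$. For $j\ge0$, $g_{j;t_1,t_2}(x)=\sum_{i=0}^{\lfloor j/2\rfloor}(-1)^i(t_1t_2)^i\binom{j-i}{i}x^{j-2i}$. $\mathbb{E}$ is the splitting field over $\mathbb{Z}_p$ of $g_{n;c,d},g_{s;a,b},g_{m;e,f}$ reduced mod $p$, and $\mathbf{R}_{j;t_1,t_2}$ is the set of roots in $\mathbb{E}$ of $g_{j;t_1,t_2}$ mod $p$. Minkowski sum: $S_1+S_2+S_3=\{x_1+x_2+x_3:x_i\in S_i\}$. *)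

(* Defs.v *)
From HB Require Import structures.
From mathcomp Require Import all_boot all_order all_algebra all_field.
Set Implicit Arguments. Unset Strict Implicit. Unset Printing Implicit Defensive.
Import Order.TTheory GRing.Theory Num.Theory.
Local Open Scope ring_scope.

(* index helpers for the Kronecker product: row i of A (x) B, with
   A : 'M_(m1,n1), B : 'M_(m2,n2), splits as (i %/ m2, i %% m2). *)
Lemma kron_divP (m1 m2 : nat) (i : 'I_(m1 * m2)) : (i %/ m2 < m1)%N.
Proof.
have m2P : (0 < m2)%N.
  by case: m2 i => [|//] [i /=]; rewrite muln0.
by rewrite ltn_divLR // ltn_ord.
Qed.

Lemma kron_modP (m1 m2 : nat) (i : 'I_(m1 * m2)) : (i %% m2 < m2)%N.
Proof.
have m2P : (0 < m2)%N.
  by case: m2 i => [|//] [i /=]; rewrite muln0.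
by rewrite ltn_pmod.
Qed.

Definition kron (R : pzRingType) (m1 n1 m2 n2 : nat)
    (A : 'M[R]_(m1, n1)) (B : 'M[R]_(m2, n2)) : 'M[R]_(m1 * m2, n1 * n2) :=
  \matrix_(i, j)
    (A (Ordinal (kron_divP i)) (Ordinal (kron_divP j)) *
     B (Ordinal (kron_modP i)) (Ordinal (kron_modP j))).

Definition Smx (R : pzRingType) (k : nat) (t1 t2 : R) : 'M[R]_k :=
  \matrix_(i, j) (if i == j.+1 :> nat then t1
                  else if j == i.+1 :> nat then t2 else 0).

Definition Mmx (R : pzRingType) (n s : nat) (a b c d : R) : 'M[R]_(s * n) :=
  kron (1%:M : 'M[R]_s) (Smx n c d) + kron (Smx s a b) (1%:M : 'M[R]_n).

Definition TRN (R : pzRingType) (n s m : nat) (a b c d e f : R)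
    : 'M[R]_(m * (s * n)) :=
  kron (1%:M : 'M[R]_m) (Mmx n s a b c d)
  + kron (Smx m f e) (1%:M : 'M[R]_(s * n)).

Definition gpoly (R : nzRingType) (j : nat) (t1 t2 : R) : {poly R} :=
  \sum_(i < j./2.+1)
     (((-1) ^+ i * (t1 * t2) ^+ i) *+ 'C(j - i, i)) *: 'X^(j - i.*2).

Definition Rset (F : fieldType) (L : fieldExtType F) (j : nat) (t1 t2 : F)
    : pred L :=
  fun x => root (map_poly (in_alg L) (gpoly j t1 t2)) x.

Definition minkowski3 (L : zmodType) (S1 S2 S3 : pred L) (z : L) : Prop :=
  exists x1 x2 x3, [/\ x1 \in S1, x2 \in S2, x3 \in S3 & z = x1 + x2 + x3].

(* Main.v *)
Require Import Defs.
From HB Require Import structures.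
From mathcomp Require Import all_boot all_order all_algebra all_field.
Import GRing.Theory.
Local Open Scope ring_scope.
From mathcomp Require Import zify ring mxtens.
Section Tri.
Variable R : comNzRingType.
Definition tri k (x l u : R) : 'M[R]_k :=
  \matrix_(i, j) (if i == j :> nat then x else if i == j.+1 :> nat then l
                  else if j == i.+1 :> nat then u else 0).
Lemma det_tri k x l u :
  \det (tri k.+2 x l u) = x * \det (tri k.+1 x l u) - l * u * \det (tri k x l u).
Proof.
rewrite (expand_det_row _ ord0) big_ord_recl big_ord_recl big1; last first.
  by move=> j _; rewrite !mxE /= /bump /= mul0r.
rewrite addr0 !mxE /= /cofactor /=.
have -> : row' ord0 (col' ord0 (tri k.+2 x l u)) = tri k.+1 x l u.
  by apply/matrixP => i j; rewrite !mxE.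
rewrite expr0 mul1r; congr (_ + _).
rewrite (expand_det_col _ ord0) big_ord_recl big1; last first.
  by move=> i _; rewrite !mxE /= /bump /= mul0r.
rewrite addr0 !mxE /= /cofactor /=.
have -> : row' ord0 (col' ord0 (row' ord0 (col' (lift ord0 ord0) (tri k.+2 x l u))))
   = tri k x l u.
  by apply/matrixP => i j; rewrite !mxE /= /bump /=.
rewrite /bump /= expr1 expr0 !mul1r mulN1r; by rewrite mulrN mulrA [u * l]mulrC.
Qed.
End Tri.
Section G.
Variable R : comNzRingType.
Definition gterm (j : nat) (t1 t2 : R) (i : nat) : {poly R} :=
  (((-1) ^+ i * (t1 * t2) ^+ i) *+ 'C(j - i, i)) *: 'X^(j - i.*2).

Lemma gpoly_wide j (t1 t2 : R) N : (j./2 < N)%N ->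
  gpoly j t1 t2 = \sum_(i < N) gterm j t1 t2 i.
Proof.
move=> hN; rewrite /gpoly (big_ord_widen N (fun i => gterm j t1 t2 i) hN).
rewrite big_mkcond /=; apply: eq_bigr => i _; case: ifP => // hi.
rewrite /gterm bin_small ?mulr0n ?scale0r //.
have := odd_double_half j; move/negbT: hi; rewrite -leqNgt -!addnn; lia.
Qed.

Lemma gpoly0 (t1 t2 : R) : gpoly 0 t1 t2 = 1.
Proof. by rewrite /gpoly big_ord1 /= expr0 mulr1 mulr1n scale1r expr0. Qed.

Lemma gpoly1 (t1 t2 : R) : gpoly 1 t1 t2 = 'X.
Proof. by rewrite /gpoly big_ord1 /= expr0 mulr1 mulr1n scale1r expr1. Qed.

Lemma gpolySS k (t1 t2 : R) :
  gpoly k.+2 t1 t2 = 'X * gpoly k.+1 t1 t2 - (t1 * t2)%:P * gpoly k t1 t2.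
Proof.
rewrite (@gpoly_wide k.+2 _ _ k.+3); last by rewrite /= ltnS; have := half_leq (leqnSn k); lia.
rewrite (@gpoly_wide k.+1 _ _ k.+3); last by have := half_leq (leqnSn k.+1); have := half_leq (leqnSn k); lia.
rewrite (@gpoly_wide k _ _ k.+2); last by have := half_leq (leqnSn k); have := half_leq (leq0n k); lia.
rewrite big_ord_recl !mulr_sumr [X in _ = X - _]big_ord_recl -addrA -sumrB /=.
congr (_ + _).
  by rewrite /gterm !bin0 !expr0 !mulr1 !mulr1n !scale1r !subn0 exprS.
apply: eq_bigr => -[i hi] _; rewrite /gterm /bump leq0n add1n /=; clear hi.
rewrite !subSS -!mul_polyC !polyCMn !rmorphM !rmorphXn /= !polyCM !polyCN.
have [lt|gt|eq] := ltngtP (i.*2) k.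
- have -> : (k.+1 - i = (k - i).+1)%N by lia.
  rewrite binS !mulrnDr.
  have -> : ('X^(k - i.*2) = 'X * 'X^(k - (i.*2).+1) :> {poly R}).
    by rewrite -exprS; congr ('X ^+ _); rewrite -addnn in lt *; lia.
  rewrite !exprS; ring.
- rewrite (@bin_small (k - i) i.+1); last by rewrite -addnn in gt; lia.
  rewrite (@bin_small (k.+1 - i) i.+1); last by rewrite -addnn in gt; lia.
  rewrite (@bin_small (k - i) i); last by rewrite -addnn in gt; lia.
  rewrite !mulr0n; ring.
- rewrite -eq.
  rewrite (@bin_small (i.*2 - i) i.+1); last by rewrite -addnn; lia.
  have -> : (i.*2.+1 - i = i.+1)%N by rewrite -addnn; lia.
  have -> : (i.*2 - i = i)%N by rewrite -addnn; lia.
  rewrite !binn subnn !exprS; ring.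
Qed.
Lemma char_poly_Smx k (t1 t2 : R) : char_poly (Smx k t1 t2) = gpoly k t1 t2.
Proof.
rewrite /char_poly.
have -> : char_poly_mx (Smx k t1 t2) = @tri {poly R} k 'X (- t1%:P) (- t2%:P).
  apply/matrixP => i j; rewrite !mxE.
  case: (eqVneq i j) => [->|ne].
    by rewrite eqxx mulr1n /= !ltn_eqF // subr0.
  have ne' : (i : nat) == j = false by apply/negbTE.
  rewrite ne' mulr0n sub0r.
  by case: ifP => _; [|case: ifP => _]; rewrite ?polyCN ?oppr0.
have H : forall k, \det (tri {poly R} k 'X (- t1%:P) (- t2%:P)) = gpoly k t1 t2 /\
                  \det (tri {poly R} k.+1 'X (- t1%:P) (- t2%:P)) = gpoly k.+1 t1 t2.
  elim=> [|k' [IH1 IH2]].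
    rewrite gpoly0 gpoly1 det_mx00 det_mx11 !mxE /=; split=> //.
  split=> //; rewrite det_tri gpolySS IH1 IH2 mulrNN polyCM //.
by case: (H k).
Qed.
End G.
Section Tens.
Variable R : comNzRingType.

Lemma kronE m1 n1 m2 n2 (A : 'M[R]_(m1, n1)) (B : 'M[R]_(m2, n2)) : kron A B = A *t B.
Proof. by apply/matrixP => i j; rewrite !mxE; congr (A _ _ * B _ _); apply: val_inj. Qed.

Lemma tensmxDl m1 n1 m2 n2 (A A' : 'M[R]_(m1, n1)) (B : 'M[R]_(m2, n2)) :
  (A + A') *t B = A *t B + A' *t B.
Proof. by apply/matrixP => i j; rewrite !mxE mulrDl. Qed.
Lemma tensmxDr m1 n1 m2 n2 (A : 'M[R]_(m1, n1)) (B B' : 'M[R]_(m2, n2)) :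
  A *t (B + B') = A *t B + A *t B'.
Proof. by apply/matrixP => i j; rewrite !mxE mulrDr. Qed.
Lemma tensmxZl m1 n1 m2 n2 (c : R) (A : 'M[R]_(m1, n1)) (B : 'M[R]_(m2, n2)) :
  (c *: A) *t B = c *: (A *t B).
Proof. by apply/matrixP => i j; rewrite !mxE mulrA. Qed.
Lemma tensmxZr m1 n1 m2 n2 (c : R) (A : 'M[R]_(m1, n1)) (B : 'M[R]_(m2, n2)) :
  A *t (c *: B) = c *: (A *t B).
Proof. by apply/matrixP => i j; rewrite !mxE mulrCA. Qed.
Lemma tensmxNl m1 n1 m2 n2 (A : 'M[R]_(m1, n1)) (B : 'M[R]_(m2, n2)) :
  (- A) *t B = - (A *t B).
Proof. by apply/matrixP => i j; rewrite !mxE mulNr. Qed.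
Lemma tensmxNr m1 n1 m2 n2 (A : 'M[R]_(m1, n1)) (B : 'M[R]_(m2, n2)) :
  A *t (- B) = - (A *t B).
Proof. by apply/matrixP => i j; rewrite !mxE mulrN. Qed.

Lemma tens11 a b : (1%:M : 'M[R]_a) *t (1%:M : 'M[R]_b) = 1%:M.
Proof.
apply/matrixP => i j.
case: (mxtens_indexP i) => i1 i2; case: (mxtens_indexP j) => j1 j2.
rewrite tensmxE !mxE -natrM mulnb; congr ((_ : bool)%:R).
apply/andP/eqP => [[/eqP -> /eqP ->]//|/(can_inj (@mxtens_indexK _ _)) [-> ->]].
by rewrite !eqxx.
Qed.

Lemma tens1s a b (r : R) : (1%:M : 'M[R]_a) *t (r%:M : 'M[R]_b) = r%:M.
Proof. by rewrite -[r%:M]scalemx1 tensmxZr tens11 scalemx1. Qed.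
Lemma tenss1 a b (r : R) : (r%:M : 'M[R]_a) *t (1%:M : 'M[R]_b) = r%:M.
Proof. by rewrite -[r%:M]scalemx1 tensmxZl tens11 scalemx1. Qed.

Fixpoint Pm N (X : 'M[R]_N) (rs : seq R) {struct rs} : 'M[R]_N :=
  if rs is r :: rs' then (X - r%:M) *m Pm N X rs' else 1%:M.
Arguments Pm {N}.

Lemma Pm_tensl a b (Y : 'M[R]_b) rs :
  Pm ((1%:M : 'M[R]_a) *t Y) rs = 1%:M *t Pm Y rs.
Proof.
elim: rs => [|r rs IH] /=; first by rewrite tens11.
by rewrite IH -(tens1s a b r) -tensmxNr -tensmxDr tensmx_mul mul1mx.
Qed.

Lemma Pm_tensr a b (Y : 'M[R]_a) rs :
  Pm (Y *t (1%:M : 'M[R]_b)) rs = Pm Y rs *t 1%:M.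
Proof.
elim: rs => [|r rs IH] /=; first by rewrite tens11.
by rewrite IH -(tenss1 a b r) -tensmxNl -tensmxDl tensmx_mul mul1mx.
Qed.

Lemma Pm_horner k (A : 'M[R]_k.+1) rs :
  horner_mx A (\prod_(r <- rs) ('X - r%:P)) = Pm A rs.
Proof.
elim: rs => [|r rs IH] /=; first by rewrite big_nil rmorph1.
by rewrite big_cons rmorphM rmorphB /= horner_mx_X horner_mx_C IH mulmxE.
Qed.
End Tens.
Arguments Pm {R N}.

Section Eig.
Variable F : fieldType.
Lemma eig_extract N (X : 'M[F]_N) (rs : seq F) (P : 'rV[F]_N -> Prop) :
  (forall v r, P v -> P (v *m X - r *: v)) ->
  forall v, P v -> v != 0 -> v *m Pm X rs = 0 ->
  exists w r, [/\ P w, w != 0, r \in rs & w *m X = r *: w].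
Proof.
move=> clP; elim: rs => [|r rs IH] v Pv nz /=.
  by rewrite mulmx1 => h; rewrite h eqxx in nz.
move=> hv.
have [e0|ne0] := eqVneq (v *m X - r *: v) 0.
  by exists v, r; split; rewrite ?mem_head //; apply/eqP; rewrite -subr_eq0 e0.
have [|w [r' [Pw nzw r'rs eqw]]] := IH (v *m X - r *: v) (clP _ _ Pv) ne0.
  by rewrite -hv mulmxA mulmxBr mul_mx_scalar.
by exists w, r'; split; rewrite // in_cons r'rs orbT.
Qed.
End Eig.

Lemma gpoly_sym (R : comNzRingType) j (t1 t2 : R) : gpoly j t1 t2 = gpoly j t2 t1.
Proof. by rewrite /gpoly; apply: eq_bigr => i _; rewrite [t1 * t2]mulrC. Qed.

Lemma split_factor (K : fieldType) (q P : {poly K}) rs :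
  q \is monic -> q %| P -> P %= \prod_(z <- rs) ('X - z%:P) ->
  exists rs', q = \prod_(z <- rs') ('X - z%:P).
Proof.
move=> mq qP hP; have := qP; rewrite (eqp_dvdr _ hP) => /dvdp_prod_XsubC [msk hm].
exists (mask msk rs); apply/eqP; rewrite -eqp_monic // monic_prod_XsubC //.
Qed.

Lemma Pm_char (K : fieldType) k (A : 'M[K]_k) rs : (0 < k)%N ->
  char_poly A = \prod_(z <- rs) ('X - z%:P) -> Pm A rs = 0.
Proof.
case: k A => // k A _ h; by rewrite -Pm_horner -h Cayley_Hamilton.
Qed.

Lemma nz_entry (K : fieldType) k (v : 'M[K]_(1, k)) : v != 0 -> exists i, v 0 i != 0.
Proof.
move=> nz; case: (boolP [exists i, v 0 i != 0]) => [/existsP//|/existsPn H].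
case/eqP: nz; apply/matrixP => a j; rewrite ord1 !mxE; exact/eqP/negPn/H.
Qed.
Arguments split_factor {K q P rs}.
Arguments Pm_char {K k A rs}.
Arguments nz_entry {K k v}.
Arguments eig_extract {F N} X rs P.

Theorem corollary4p3 (p : nat) (hp : prime p) (n s m : nat)
    (hn : (2 <= n)%N) (hs : (2 <= s)%N) (hm : (2 <= m)%N)
    (a b c d e f : 'F_p)
    (E : fieldExtType 'F_p)
    (hE : splittingFieldFor 1%VS
            (map_poly (in_alg E) (gpoly n c d * gpoly s a b * gpoly m e f))
            fullv) :
  (TRN n s m a b c d e f \in unitmx) <->
  ~ minkowski3 (Rset (L:=E) n c d) (Rset (L:=E) s a b) (Rset (L:=E) m e f) 0.
Proof.
set iota := in_alg E.
set A := map_mx iota (Smx n c d).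
set B := map_mx iota (Smx s a b).
set C := map_mx iota (Smx m f e).
have charA : char_poly A = map_poly iota (gpoly n c d).
  by rewrite /A -map_char_poly char_poly_Smx.
have charB : char_poly B = map_poly iota (gpoly s a b).
  by rewrite /B -map_char_poly char_poly_Smx.
have charC : char_poly C = map_poly iota (gpoly m e f).
  by rewrite /C -map_char_poly char_poly_Smx gpoly_sym.
set X1 : 'M[E]_(m * (s * n)) := 1%:M *t (1%:M *t A).
set X2 : 'M[E]_(m * (s * n)) := 1%:M *t (B *t 1%:M).
set X3 : 'M[E]_(m * (s * n)) := C *t 1%:M.
have hT : map_mx iota (TRN n s m a b c d e f) = X1 + X2 + X3.
  rewrite /TRN /Mmx !kronE !(map_mxD, map_mxT, map_scalar_mx, rmorph1).
  by rewrite tensmxDr.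
have Ex : forall X Y : 'M[E]_(m * (s * n)), X *m Y = Y *m X ->
    forall v : 'rV[E]_(m * (s * n)), v *m X *m Y = v *m Y *m X.
  by move=> X Y h v; rewrite -!mulmxA h.
have c12 : X1 *m X2 = X2 *m X1 by rewrite !tensmx_mul !mul1mx !mulmx1.
have c13 : X1 *m X3 = X3 *m X1 by rewrite !tensmx_mul !mul1mx !mulmx1.
have c23 : X2 *m X3 = X3 *m X2 by rewrite !tensmx_mul !mul1mx !mulmx1.
have cT : forall X, X *m X1 = X1 *m X -> X *m X2 = X2 *m X -> X *m X3 = X3 *m X ->
    X *m (X1 + X2 + X3) = (X1 + X2 + X3) *m X.
  by move=> X h1 h2 h3; rewrite !mulmxDr !mulmxDl h1 h2 h3.
case: hE => rs hP _.
rewrite !rmorphM /= in hP.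
have [rsA hA] : exists rsA, char_poly A = \prod_(z <- rsA) ('X - z%:P).
  apply: (split_factor (char_poly_monic _) _ hP).
  by rewrite charA; apply/dvdp_mulr/dvdp_mulr/dvdpp.
have [rsB hB] : exists rsB, char_poly B = \prod_(z <- rsB) ('X - z%:P).
  apply: (split_factor (char_poly_monic _) _ hP).
  by rewrite charB; apply/dvdp_mulr/dvdp_mull/dvdpp.
have [rsC hC] : exists rsC, char_poly C = \prod_(z <- rsC) ('X - z%:P).
  apply: (split_factor (char_poly_monic _) _ hP).
  by rewrite charC; apply/dvdp_mull/dvdpp.
have PA : Pm A rsA = 0 by apply: Pm_char hA; lia.
have PB : Pm B rsB = 0 by apply: Pm_char hB; lia.
have PC : Pm C rsC = 0 by apply: Pm_char hC; lia.
rewrite -(map_unitmx iota) hT.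
split.
  move=> hu [x1 [x2 [x3 [h1 h2 h3 h0]]]].
  have : eigenvalue A x1 by rewrite eigenvalue_root_char charA; exact h1.
  case/eigenvalueP => u hu1 nzu.
  have : eigenvalue B x2 by rewrite eigenvalue_root_char charB; exact h2.
  case/eigenvalueP => v hv1 nzv.
  have : eigenvalue C x3 by rewrite eigenvalue_root_char charC; exact h3.
  case/eigenvalueP => w hw1 nzw.
  set x := w *t (v *t u).
  have hx : x *m (X1 + X2 + X3) = 0.
    rewrite !mulmxDr /x /X1 /X2 /X3 !tensmx_mul !mulmx1 hu1 hv1 hw1.
    by rewrite !tensmxZl !tensmxZr -!scalerDl -h0 scale0r.
  have := mulmxK hu x; rewrite hx mul0mx => x0.
  have [iu ru] := nz_entry nzu; have [iv rv] := nz_entry nzv.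
  have [iw rw] := nz_entry nzw.
  have := congr1 (fun M : 'M[E]_(1 * (1 * 1), m * (s * n)) => M (mxtens_index (ord0, mxtens_index (ord0, ord0)))
                              (mxtens_index (iw, mxtens_index (iv, iu)))) x0.
  rewrite /x !tensmxE mxE => /eqP; rewrite eq_sym !mulf_eq0.
  by rewrite (negbTE ru) (negbTE rv) (negbTE rw).
move=> hnm; case: (boolP (_ \in unitmx)) => // nu; exfalso; apply: hnm.
have : \det (X1 + X2 + X3) == 0 by rewrite unitmxE unitfE negbK in nu.
case/det0P => x nzx hx.
have cT3 : X3 *m (X1 + X2 + X3) = (X1 + X2 + X3) *m X3 by apply: cT => /=; rewrite !tensmx_mul ?mul1mx ?mulmx1.
have cT2 : X2 *m (X1 + X2 + X3) = (X1 + X2 + X3) *m X2 by apply: cT => /=; rewrite !tensmx_mul ?mul1mx ?mulmx1.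
have cT1 : X1 *m (X1 + X2 + X3) = (X1 + X2 + X3) *m X1 by apply: cT => /=; rewrite !tensmx_mul ?mul1mx ?mulmx1.
set T := X1 + X2 + X3 in hx cT1 cT2 cT3 *.
have cl3 : forall (v : 'rV[E]_(m * (s * n))) (r : E), v *m T = 0 -> (v *m X3 - r *: v) *m T = 0.
  by move=> v r hv; rewrite mulmxBl -scalemxAl hv scaler0 subr0 -mulmxA cT3 mulmxA hv mul0mx.
have pm3 : x *m Pm X3 rsC = 0 by rewrite /X3 Pm_tensr PC tens0mx mulmx0.
have [w3 [r3 [P3 nz3 i3 e3]]] := eig_extract X3 rsC _ cl3 x hx nzx pm3.
pose P2 := fun v : 'rV[E]_(m * (s * n)) => v *m T = 0 /\ v *m X3 = r3 *: v.
have cl2 : forall v r, P2 v -> P2 (v *m X2 - r *: v).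
  move=> v r [hv1 hv2]; split.
    by rewrite mulmxBl -scalemxAl hv1 scaler0 subr0 -mulmxA cT2 mulmxA hv1 mul0mx.
  by rewrite mulmxBl -scalemxAl hv2 -mulmxA c23 mulmxA hv2 -scalemxAl scalerBr !scalerA mulrC.
have pm2 : w3 *m Pm X2 rsB = 0 by rewrite /X2 Pm_tensl Pm_tensr PB tens0mx tensmx0 mulmx0.
have [w2 [r2 [[P21 P22] nz2 i2 e2]]] := eig_extract X2 rsB P2 cl2 w3 (conj P3 e3) nz3 pm2.
pose P1 := fun v : 'rV[E]_(m * (s * n)) => [/\ v *m T = 0, v *m X3 = r3 *: v & v *m X2 = r2 *: v].
have cl1 : forall v r, P1 v -> P1 (v *m X1 - r *: v).
  move=> v r [hv1 hv2 hv3]; split.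
  - by rewrite mulmxBl -scalemxAl hv1 scaler0 subr0 -mulmxA cT1 mulmxA hv1 mul0mx.
  - by rewrite mulmxBl -scalemxAl hv2 -mulmxA c13 mulmxA hv2 -scalemxAl scalerBr !scalerA mulrC.
  - by rewrite mulmxBl -scalemxAl hv3 -mulmxA c12 mulmxA hv3 -scalemxAl scalerBr !scalerA mulrC.
have pm1 : w2 *m Pm X1 rsA = 0 by rewrite /X1 !Pm_tensl PA !tensmx0 mulmx0.
have [w1 [r1 [[Q1 Q2 Q3] nz1 i1 e1]]] := eig_extract X1 rsA P1 cl1 w2 (And3 P21 P22 e2) nz2 pm1.
exists r1, r2, r3; split.
- by rewrite /Rset unfold_in /= -charA hA root_prod_XsubC.
- by rewrite /Rset unfold_in /= -charB hB root_prod_XsubC.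
- by rewrite /Rset unfold_in /= -charC hC root_prod_XsubC.
move: Q1; rewrite /T !mulmxDr e1 Q3 Q2 -!scalerDl => /eqP.
by rewrite scaler_eq0 (negbTE nz1) orbF => /eqP ->.
Qed.
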